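(* Let $G$ be a graph such that three or more edges join vertices $v$ and $w$. If $e$ is one of these edges, then $\lfloor \mathrm{sp}\rfloor(G\backslash e)=\lfloor \mathrm{sp}\rfloor(G)$.
   Context: All graphs are finite, have at least one vertex, have no loops, and may have multiple (parallel) edges. $G\backslash e$ denotes deletion of edge $e$. A unique shortest path is a shortest $u$–$v$ path $P$ such that every $u$–$v$ path with the same number of vertices is identical to $P$, where two paths with different edge sequences are different even if their vertex sequences agree; a single vertex is a unique shortest path. The parade number $\mathrm{usp}(G)$ is the largest number of vertices of a unique shortest path in $G$. The spectator number is $\mathrm{sp}(G)=|V(G)|-\mathrm{usp}(G)$. A minor of $H$ is any graph obtained from $H$ by a sequence of: deleting an isolated vertex, deleting an edge, contracting an edge that has no edge parallel to it. The spectator floor $\lfloor \mathrm{sp}\rfloor(G)$ is the minimum of $\mathrm{sp}(H)$ over all graphs $H$ of which $G$ is a minor. *)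

(* Defs.v *)
From mathcomp Require Import all_boot.
From mathcomp Require Import boolp.

Set Implicit Arguments.
Unset Strict Implicit.
Unset Printing Implicit Defensive.

(* A finite loopless multigraph: vertices 0 .. nv-1, edges are the entries
   of the list [edges]; the i-th edge is identified by its position i, so
   equal (unordered) entries are parallel edges. *)
Record graph := Graph { nv : nat; edges : seq (nat * nat) }.

Definition nrm (e : nat * nat) : nat * nat := (minn e.1 e.2, maxn e.1 e.2).

Definition emap (f : nat -> nat) (e : nat * nat) : nat * nat := (f e.1, f e.2).

Definition wf (G : graph) : Prop :=
  0 < nv G /\ all (fun e => [&& e.1 < nv G, e.2 < nv G & e.1 != e.2]) (edges G).

Definition edge_at (G : graph) (i : nat) : nat * nat := nth (0, 0) (edges G) i.

Definition rem_at (i : nat) (s : seq (nat * nat)) := take i s ++ drop i.+1 s.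

Definition del_edge (G : graph) (i : nat) : graph :=
  Graph (nv G) (rem_at i (edges G)).

(* relabelling after removing vertex v *)
Definition dn (v x : nat) : nat := if v < x then x.-1 else x.

Definition isolated (G : graph) (v : nat) : bool :=
  all (fun e => (e.1 != v) && (e.2 != v)) (edges G).

Definition del_vertex (G : graph) (v : nat) : graph :=
  Graph (nv G).-1 (map (emap (dn v)) (edges G)).

Definition mult (G : graph) (i : nat) : nat :=
  count (fun e => nrm e == nrm (edge_at G i)) (edges G).

Definition contract (G : graph) (i : nat) : graph :=
  let a := (edge_at G i).1 in let b := (edge_at G i).2 in
  Graph (nv G).-1
        (map (emap (fun x => dn b (if x == b then a else x))) (rem_at i (edges G))).

Inductive minor_step (H : graph) : graph -> Prop :=
| MS_del_vertex v : v < nv H -> 1 < nv H -> isolated H v ->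
    minor_step H (del_vertex H v)
| MS_del_edge i : i < size (edges H) -> minor_step H (del_edge H i)
| MS_contract i : i < size (edges H) -> mult H i = 1 ->
    minor_step H (contract H i).

Inductive minor_steps (H : graph) : graph -> Prop :=
| MSS_refl : minor_steps H H
| MSS_step K L : minor_steps H K -> minor_step K L -> minor_steps H L.

Definition iso (G1 G2 : graph) : Prop :=
  exists f : nat -> nat,
    [/\ nv G1 = nv G2,
        {in gtn (nv G1) &, injective f},
        {in gtn (nv G1), forall x, f x < nv G2} &
        perm_eq (map (fun e => nrm (emap f e)) (edges G1)) (map nrm (edges G2))].

Definition minor (G H : graph) : Prop :=
  exists K, minor_steps H K /\ iso K G.

(* walks: start vertex x, then a list of steps (edge index, next vertex) *)
Fixpoint walk (G : graph) (x : nat) (s : seq (nat * nat)) : bool :=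
  match s with
  | [::] => true
  | (j, y) :: s' =>
      [&& j < size (edges G), nrm (edge_at G j) == nrm (x, y) & walk G y s']
  end.

(* a path: a walk with pairwise distinct vertices; it has (size s).+1 vertices *)
Definition is_path (G : graph) (x : nat) (s : seq (nat * nat)) : bool :=
  [&& x < nv G, walk G x s & uniq (x :: map snd s)].

Definition path_end (x : nat) (s : seq (nat * nat)) : nat := last x (map snd s).

(* unique shortest path: every path with the same ends and at most as many
   vertices is identical (same vertex AND edge sequence) *)
Definition is_usp (G : graph) (x : nat) (s : seq (nat * nat)) : Prop :=
  is_path G x s /\
  forall t, is_path G x t -> path_end x t = path_end x s ->
    size t <= size s -> t = s.

Definition usp (G : graph) : nat :=
  \max_(k < (nv G).+1 | `[< exists x s, is_usp G x s /\ (size s).+1 = k >]) k.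

Definition sp (G : graph) : nat := nv G - usp G.

(* spectator floor: minimum of sp H over all graphs H having G as a minor.
   The disjunct (m == sp G) is redundant for well-formed G (G is a minor of
   itself); it only makes the minimum total. *)
Definition floor_pred (G : graph) : pred nat :=
  fun m => `[< exists H, wf H /\ minor G H /\ sp H = m >] || (m == sp G).

Lemma floor_ex (G : graph) : exists m, floor_pred G m.
Proof. by exists (sp G); rewrite /floor_pred eqxx orbT. Qed.

Definition sp_floor (G : graph) : nat := ex_minn (floor_ex G).

(* Main.v *)
Require Import Defs.
From mathcomp Require Import all_boot boolp zify.

Set Implicit Arguments.
Unset Strict Implicit.
Unset Printing Implicit Defensive.

Definition addE (G : graph) (e : nat * nat) : graph := Graph (nv G) (rcons (edges G) e).

Lemma nrm_sym x y : nrm (x, y) = nrm (y, x).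
Proof. by rewrite /nrm /= minnC maxnC. Qed.

Lemma nrm_eqP p q p' q' : nrm (p, q) = nrm (p', q') ->
  (p = p' /\ q = q') \/ (p = q' /\ q = p').
Proof. rewrite /nrm /= => -[]; lia. Qed.

Lemma edge_at_addE G e i : i < size (edges G) -> edge_at (addE G e) i = edge_at G i.
Proof. by move=> hi; rewrite /edge_at /= nth_rcons hi. Qed.

Lemma edge_at_addE_new G e : edge_at (addE G e) (size (edges G)) = e.
Proof. by rewrite /edge_at /= nth_rcons ltnn eqxx. Qed.

Lemma rem_at_rcons i s e : i < size s ->
  rem_at i (rcons s e) = rcons (rem_at i s) e.
Proof.
move=> hi; rewrite /rem_at -!cats1 take_cat hi drop_cat.
rewrite -catA; congr (_ ++ _); case: ifP => // h.
rewrite (drop_oversize (n:=i.+1) (s:=s)); last lia.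
by have -> : i.+1 - size s = 0 by lia.
Qed.

Lemma size_rem_at i s : i < size s -> size (rem_at i s) = (size s).-1.
Proof. move=> hi; rewrite /rem_at size_cat size_take size_drop hi; lia. Qed.

Lemma nth_rem_at i s k : i < size s ->
  nth (0,0) (rem_at i s) k = nth (0,0) s (if k < i then k else k.+1).
Proof.
move=> hi; rewrite /rem_at nth_cat size_take hi.
case: ifP => hk; first by rewrite nth_take.
by rewrite nth_drop; congr nth; lia.
Qed.

Lemma map_rem_at (T : Type) (F : nat * nat -> T) i s :
  map F (rem_at i s) = take i (map F s) ++ drop i.+1 (map F s).
Proof. by rewrite /rem_at map_cat map_take map_drop. Qed.

Lemma perm_nth (T : eqType) (x0 : T) (l : seq T) j : j < size l ->
  perm_eq l (nth x0 l j :: (take j l ++ drop j.+1 l)).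
Proof.
move=> hj.
rewrite -{1}(cat_take_drop j l) (drop_nth x0 hj) -cat1s.
by rewrite -[_ :: _]/([:: _] ++ _) perm_catCA.
Qed.

Lemma path_end_cons x j y s : path_end x ((j, y) :: s) = path_end y s.
Proof. by []. Qed.

Lemma path_end_cat x s1 s2 : path_end x (s1 ++ s2) = path_end (path_end x s1) s2.
Proof. by rewrite /path_end map_cat last_cat. Qed.

Lemma walk_cat G x s1 s2 :
  walk G x (s1 ++ s2) = walk G x s1 && walk G (path_end x s1) s2.
Proof.
elim: s1 x => [//|[j y] s1 IH] x /=.
by rewrite IH !andbA.
Qed.

Lemma shorten G x s : walk G x s -> exists t,
  [/\ walk G x t, path_end x t = path_end x s, uniq (x :: map snd t),
      size t <= size s & (size t = size s -> t = s)].
Proof.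
elim: s x => [|[j y] s IH] x.
  by move=> _; exists [::]; split.
move=> /= /and3P [hj hn hw].
have [t' [wt' et' ut' st' qt']] := IH y hw.
have [xy | nxy] := eqVneq x y.
  subst y; exists t'; split => //.
  - lia.
  - move=> h; lia.
case xt: (x \in map snd t').
  have [p pin px] := mapP xt.
  move: wt' ut' et' st' qt'; case/splitPr: pin => t1 t2.
  case: p px => a b /= ?; subst b => wt' ut' et' st' qt'.
  exists t2; split.
  - by move: wt'; rewrite walk_cat => /andP [_] /= /and3P [].
  - by rewrite path_end_cons -et' path_end_cat.
  - move: ut'; rewrite /= map_cat cat_uniq /= => /andP [_] /and3P [_ _] /andP [->] ->.
    by [].
  - move: st'; rewrite size_cat /=; lia.
  - move: st'; rewrite size_cat /= => h1 h2; lia.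
exists ((j, y) :: t'); split => /=.
- by rewrite hj hn wt'.
- by [] || rewrite path_end_cons et'.
- by move: ut' => /= ->; rewrite inE negb_or nxy xt.
- by [].
- by move=> [] /qt' ->.
Qed.

Definition apred H p0 (s : seq (nat * nat)) u : pred nat := fun k =>
  (k == (size s).+1) || `[< exists t, [/\ walk H p0 t, path_end p0 t = u & size t = k] >].
Lemma apred_ex H p0 s u : exists k, apred H p0 s u k.
Proof. by exists (size s).+1; rewrite /apred eqxx. Qed.
Definition ad H p0 s u := ex_minn (apred_ex H p0 s u).

Definition bpred H p0 (s : seq (nat * nat)) u : pred nat := fun k =>
  (k == (size s).+1) || `[< exists t, [/\ walk H u t, path_end u t = path_end p0 s & size t = k] >].
Lemma bpred_ex H p0 s u : exists k, bpred H p0 s u k.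
Proof. by exists (size s).+1; rewrite /bpred eqxx. Qed.
Definition bd H p0 s u := ex_minn (bpred_ex H p0 s u).

Lemma ad_le H p0 s u : ad H p0 s u <= (size s).+1.
Proof. rewrite /ad; case: ex_minnP => k _ /(_ (size s).+1); apply; by rewrite /apred eqxx. Qed.
Lemma bd_le H p0 s u : bd H p0 s u <= (size s).+1.
Proof. rewrite /bd; case: ex_minnP => k _ /(_ (size s).+1); apply; by rewrite /bpred eqxx. Qed.

Lemma ad_walk H p0 s t : walk H p0 t -> ad H p0 s (path_end p0 t) <= size t.
Proof.
move=> w; rewrite /ad; case: ex_minnP => k _ /(_ (size t)); apply.
by rewrite /apred; apply/orP; right; apply/asboolP; exists t.
Qed.
Lemma bd_walk H p0 s u t : walk H u t -> path_end u t = path_end p0 s -> bd H p0 s u <= size t.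
Proof.
move=> w e; rewrite /bd; case: ex_minnP => k _ /(_ (size t)); apply.
by rewrite /bpred; apply/orP; right; apply/asboolP; exists t.
Qed.
Lemma ad_lt H p0 s u : ad H p0 s u < (size s).+1 ->
  exists t, [/\ walk H p0 t, path_end p0 t = u & size t = ad H p0 s u].
Proof.
rewrite /ad; case: ex_minnP => k; rewrite /apred => /orP [/eqP -> | /asboolP h] _.
  by rewrite ltnn.
by [].
Qed.
Lemma bd_lt H p0 s u : bd H p0 s u < (size s).+1 ->
  exists t, [/\ walk H u t, path_end u t = path_end p0 s & size t = bd H p0 s u].
Proof.
rewrite /bd; case: ex_minnP => k; rewrite /bpred => /orP [/eqP -> | /asboolP h] _.
  by rewrite ltnn.
by [].
Qed.

Lemma walk_step H x j y : j < size (edges H) -> nrm (edge_at H j) = nrm (x, y) ->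
  walk H x [:: (j, y)].
Proof. by move=> hj he /=; rewrite hj he eqxx. Qed.

Lemma ad_lip H p0 s j p q : j < size (edges H) -> nrm (edge_at H j) = nrm (p, q) ->
  ad H p0 s q <= (ad H p0 s p).+1.
Proof.
move=> hj he; case: (ltnP (ad H p0 s p) (size s).+1) => h.
  have [t [w e sz]] := ad_lt h.
  have w2 : walk H p0 (t ++ [:: (j, q)]) by rewrite walk_cat w e walk_step.
  have := ad_walk s w2; rewrite path_end_cat size_cat sz /= addn1 => h2.
  exact: h2.
by have := ad_le H p0 s q; lia.
Qed.

Lemma bd_lip H p0 s j p q : j < size (edges H) -> nrm (edge_at H j) = nrm (p, q) ->
  bd H p0 s p <= (bd H p0 s q).+1.
Proof.
move=> hj he; case: (ltnP (bd H p0 s q) (size s).+1) => h.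
  have [t [w e sz]] := bd_lt h.
  have w2 : walk H p ((j, q) :: t) by rewrite /= hj he eqxx w.
  by have := bd_walk w2 e; rewrite /= sz.
by have := bd_le H p0 s p; lia.
Qed.

Definition pv p0 (s : seq (nat * nat)) c := nth p0 (p0 :: map snd s) c.
Lemma path_end_pv p0 s1 s2 : path_end p0 s1 = pv p0 (s1 ++ s2) (size s1).
Proof.
rewrite /pv /path_end map_cat -cat_cons nth_cat /= size_map ltnSn.
by have := nth_last p0 (p0 :: map snd s1); rewrite /= size_map => ->.
Qed.


Lemma sum_ge H p0 s u : is_usp H p0 s -> size s <= ad H p0 s u + bd H p0 s u.
Proof.
move=> [[/and3P [hp0 _ _]] hU].
case: (ltnP (ad H p0 s u) (size s).+1) => ha; last lia.
case: (ltnP (bd H p0 s u) (size s).+1) => hb; last lia.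
have [t1 [w1 e1 s1]] := ad_lt ha.
have [t2 [w2 e2 s2]] := bd_lt hb.
have w : walk H p0 (t1 ++ t2) by rewrite walk_cat w1 e1.
have [t [wt et ut st _]] := shorten w.
rewrite leqNgt; apply/negP => hlt.
have := hU t; rewrite /is_path hp0 wt ut et path_end_cat e1 e2 => /(_ isT erefl).
move: st; rewrite size_cat s1 s2 => st h.
have := h ltac:(lia) => eq; move: st; rewrite eq; lia.
Qed.

Lemma tight H p0 s u : is_usp H p0 s -> ad H p0 s u + bd H p0 s u = size s ->
  u = pv p0 s (ad H p0 s u).
Proof.
move=> [[/and3P [hp0 _ _]] hU] hs.
have ha : ad H p0 s u < (size s).+1 by lia.
have hb : bd H p0 s u < (size s).+1 by lia.
have [t1 [w1 e1 s1]] := ad_lt ha.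
have [t2 [w2 e2 s2]] := bd_lt hb.
have w : walk H p0 (t1 ++ t2) by rewrite walk_cat w1 e1.
have [t [wt et ut st qt]] := shorten w.
have := hU t; rewrite /is_path hp0 wt ut et path_end_cat e1 e2 => /(_ isT erefl).
move: st qt; rewrite size_cat s1 s2 hs => st qt /(_ st) ets.
have e : t1 ++ t2 = s by rewrite -ets qt // ets.
by rewrite -s1 -e -path_end_pv e1.
Qed.

Lemma on_P_edge H p0 s c j : is_usp H p0 s -> c < size s -> j < size (edges H) ->
  nrm (edge_at H j) = nrm (pv p0 s c, pv p0 s c.+1) -> j = (nth (0,0) s c).1.
Proof.
move=> [[/and3P [hp0 ws us]] hU] hc hj he.
set t := take c s ++ (j, (nth (0,0) s c).2) :: drop c.+1 s.
have es : s = take c s ++ nth (0,0) s c :: drop c.+1 s.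
  by rewrite -drop_nth // cat_take_drop.
have hsz : size (take c s) = c by rewrite size_take hc.
have mt : map snd t = map snd s.
  by rewrite [in RHS]es /t !map_cat.
have hpc : path_end p0 (take c s) = pv p0 s c.
  by rewrite (path_end_pv _ _ (nth (0,0) s c :: drop c.+1 s)) -es hsz.
have hpc1 : (nth (0,0) s c).2 = pv p0 s c.+1.
  by rewrite /pv /= (nth_map (0,0)).
have wt : walk H p0 t.
  rewrite /t walk_cat; move: ws; rewrite {1}es walk_cat => /andP [-> /=].
  case: (nth (0,0) s c) hpc1 => a b /= hb /and3P [_ _ ->].
  by rewrite hj hpc he hb eqxx.
have := hU t; rewrite /is_path hp0 wt mt us /path_end mt => /(_ isT erefl).
rewrite /t size_cat /= size_drop hsz => /(_ ltac:(lia)).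
move=> /(congr1 (fun l => nth (0,0) l c)); rewrite nth_cat hsz ltnn subnn /= => <-.
by [].
Qed.

Definition lo H p0 s u := size s - bd H p0 s u.
Definition hi H p0 s u := ad H p0 s u.
Definition good H p0 s x y := (lo H p0 s y <= hi H p0 s x) && (lo H p0 s x <= hi H p0 s y).

Lemma lo_le_hi H p0 s u : is_usp H p0 s -> lo H p0 s u <= hi H p0 s u.
Proof. move=> hP; have := sum_ge u hP; rewrite /lo /hi; lia. Qed.

Lemma lip_all H p0 s j p q : j < size (edges H) -> edge_at H j = (p, q) ->
  [/\ lo H p0 s p <= (lo H p0 s q).+1, lo H p0 s q <= (lo H p0 s p).+1,
      hi H p0 s p <= (hi H p0 s q).+1 & hi H p0 s q <= (hi H p0 s p).+1].
Proof.
move=> hj he.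
have e1 : nrm (edge_at H j) = nrm (p, q) by rewrite he.
have e2 : nrm (edge_at H j) = nrm (q, p) by rewrite he nrm_sym.
have := ad_lip p0 s hj e1; have := ad_lip p0 s hj e2.
have := bd_lip p0 s hj e1; have := bd_lip p0 s hj e2.
rewrite /lo /hi => *; split; lia.
Qed.

Lemma edge_analysis H p0 s j h h' : is_usp H p0 s -> j < size (edges H) ->
  edge_at H j = (h, h') -> ~~ good H p0 s h h' ->
  exists c, [/\ c < size s, j = (nth (0,0) s c).1 &
    (lo H p0 s h = c /\ hi H p0 s h = c /\ lo H p0 s h' = c.+1 /\ hi H p0 s h' = c.+1) \/
    (lo H p0 s h' = c /\ hi H p0 s h' = c /\ lo H p0 s h = c.+1 /\ hi H p0 s h = c.+1)].
Proof.
move=> hP hj he ng.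
have e1 : nrm (edge_at H j) = nrm (h, h') by rewrite he.
have e2 : nrm (edge_at H j) = nrm (h', h) by rewrite he nrm_sym.
have l1 := ad_lip p0 s hj e1; have l2 := ad_lip p0 s hj e2.
have l3 := bd_lip p0 s hj e1; have l4 := bd_lip p0 s hj e2.
have g1 := sum_ge h hP; have g2 := sum_ge h' hP.
move: ng; rewrite /good /lo /hi negb_and -!ltnNge => /orP [] ng.
- have t1 : ad H p0 s h + bd H p0 s h = size s by lia.
  have t2 : ad H p0 s h' + bd H p0 s h' = size s by lia.
  have a2 : ad H p0 s h' = (ad H p0 s h).+1 by lia.
  exists (ad H p0 s h); split; [lia| |left; lia].
  apply: (on_P_edge hP) => //; first lia.
  by rewrite e1 -a2 -(tight hP t1) -(tight hP t2).
- have t1 : ad H p0 s h + bd H p0 s h = size s by lia.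
  have t2 : ad H p0 s h' + bd H p0 s h' = size s by lia.
  have a2 : ad H p0 s h = (ad H p0 s h').+1 by lia.
  exists (ad H p0 s h'); split; [lia| |right; lia].
  apply: (on_P_edge hP) => //; first lia.
  by rewrite e2 -a2 -(tight hP t1) -(tight hP t2).
Qed.

Lemma walk_addE H e x t : walk H x t -> walk (addE H e) x t.
Proof.
elim: t x => [//|[j y] t IH] x /= /and3P [hj hn hw].
rewrite size_rcons ltnS ltnW //= edge_at_addE // hn; exact: IH.
Qed.

Lemma walk_unaddE H e x t : walk (addE H e) x t ->
  ~~ has (fun p => p.1 == size (edges H)) t -> walk H x t.
Proof.
elim: t x => [//|[j y] t IH] x /= /and3P [hj hn hw].
rewrite negb_or => /andP [hjn hh].
have hj' : j < size (edges H) by move: hj; rewrite size_rcons ltnS leq_eqVlt (negbTE hjn).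
rewrite hj' -(edge_at_addE e hj') hn; exact: IH.
Qed.

Lemma first_split (T : Type) (P : pred T) (t : seq T) : has P t ->
  exists t1 p t2, [/\ t = t1 ++ p :: t2, P p & ~~ has P t1].
Proof.
elim: t => [//|a t IH] /=.
case Pa: (P a) => /=.
  by move=> _; exists [::], a, t.
move=> /IH [t1 [p [t2 [-> Pp nh]]]].
by exists (a :: t1), p, t2; rewrite /= Pa.
Qed.

Lemma usp_keep H p0 s x y : is_usp H p0 s -> good H p0 s x y ->
  is_usp (addE H (x, y)) p0 s.
Proof.
move=> hP; have [[/and3P [hp0 ws us]] hU] := hP => hg.
split; first by rewrite /is_path hp0 walk_addE.
move=> t /and3P [_ wt ut] et st.
case ht: (has (fun p => p.1 == size (edges H)) t); last first.
  by apply: hU => //; rewrite /is_path hp0 ut (walk_unaddE wt) ?ht.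
have [t1 [[n z] [t2 [tE /eqP /= nE nh1]]]] := first_split ht.
subst t n.
move: wt; rewrite walk_cat => /andP [w1]; rewrite /= => /and3P [_].
rewrite edge_at_addE_new => /eqP exz w2.
have w1' := walk_unaddE w1 nh1.
have nh2 : ~~ has (fun p => p.1 == size (edges H)) t2.
  apply/negP => h2; have [t3 [[n2 z2] [t4 [tE2 /eqP /= nE2 _]]]] := first_split h2.
  subst t2 n2.
  move: w2; rewrite walk_cat => /andP [_]; rewrite /= => /and3P [_].
  rewrite edge_at_addE_new => /eqP exz2 _.
  have hz2 : z2 = z \/ z2 = path_end p0 t1.
    have := etrans (esym exz) exz2 => /nrm_eqP; lia.
  have hu : uniq ((p0 :: map snd t1) ++ (z :: map snd t3 ++ z2 :: map snd t4)).
    by move: ut; rewrite map_cat /= map_cat /= => ->.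
  move: hu; rewrite cat_uniq => /and3P [_ hd hu2].
  case: hz2 => ?; subst z2.
  - by move: hu2; rewrite /= mem_cat inE eqxx !orbT.
  - move/negP: hd; apply; apply/hasP; exists (path_end p0 t1).
      by rewrite inE mem_cat inE eqxx !orbT.
    exact: mem_last.
exfalso.
have w2' := walk_unaddE w2 nh2.
have ea := ad_walk s w1'.
have e2 : path_end z t2 = path_end p0 s by rewrite -et path_end_cat.
have eb := bd_walk w2' e2.
move: st hg; rewrite size_cat /= /good /lo /hi => st /andP [g1 g2].
case: (nrm_eqP exz) => [[? ?]|[? ?]]; subst; lia.
Qed.

Definition gapfree (S : nat -> Prop) :=
  forall k1 k k2, S k1 -> S k2 -> k1 <= k <= k2 -> S k.

Lemma gap_union (S T : nat -> Prop) r r' : gapfree S -> gapfree T -> S r -> T r' ->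
  r <= r'.+1 -> r' <= r.+1 -> gapfree (fun k => S k \/ T k).
Proof.
move=> gS gT Sr Tr' h1 h2 k1 k k2 [S1|T1] [S2|T2] hk.
- by left; apply: (gS k1 k k2).
- case: (leqP k r) => hkr; first by left; apply: (gS k1 k r) => //; lia.
  by right; apply: (gT r' k k2) => //; lia.
- case: (leqP k r') => hkr; first by right; apply: (gT k1 k r') => //; lia.
  by left; apply: (gS r k k2) => //; lia.
- by right; apply: (gT k1 k k2).
Qed.

Definition cov (lo hi phi : nat -> nat) (alive : nat -> bool) X k :=
  exists u, [/\ alive u, phi u = X & lo u <= k <= hi u].

Record Inv (H L : graph) (lo hi : nat -> nat) (phi : nat -> nat) (alive : nat -> bool)
  (o : nat -> nat) : Prop := {
 i_alive : forall u, alive u -> u < nv H /\ phi u < nv L;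
 i_edge : forall k, k < size (edges L) -> [/\ o k < size (edges H),
    alive (edge_at H (o k)).1, alive (edge_at H (o k)).2 &
    emap phi (edge_at H (o k)) = edge_at L k];
 i_inj : forall k k', k < size (edges L) -> k' < size (edges L) -> o k = o k' -> k = k';
 i_loop : forall k, k < size (edges L) -> (edge_at L k).1 != (edge_at L k).2;
 i_gap : forall X, gapfree (cov lo hi phi alive X);
 i_lift : forall u u', alive u -> alive u' -> phi u != phi u' ->
    minor_steps (addE H (u, u')) (addE L (phi u, phi u'))
}.

Lemma dn_lt v x n : v < n -> x < n -> x != v -> dn v x < n.-1.
Proof. rewrite /dn; case: ifP => h hv hx /eqP hxv; lia. Qed.

Lemma dn_inj v x y : x != v -> y != v -> dn v x = dn v y -> x = y.
Proof. rewrite /dn => /eqP h1 /eqP h2; case: ifP; case: ifP; lia. Qed.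

Definition psi (a b x : nat) := dn b (if x == b then a else x).

Lemma psi_coll a b x y : a != b -> x != y -> psi a b x = psi a b y ->
  (x = a /\ y = b) \/ (x = b /\ y = a).
Proof.
rewrite /psi => hab hxy.
case: (eqVneq x b) => hx; case: (eqVneq y b) => hy.
- by move: hxy; rewrite hx hy eqxx.
- move=> /(dn_inj hab hy) ->; by right.
- move=> /esym /(dn_inj hab hx) ->; by left.
- by move=> /(dn_inj hx hy) /eqP; rewrite (negbTE hxy).
Qed.

Lemma psi_lt a b x n : a < n -> b < n -> a != b -> x < n -> psi a b x < n.-1.
Proof.
move=> ha hb hab hx; rewrite /psi; apply: dn_lt => //.
  by case: ifP.
by case: ifP => // /negbT.
Qed.

Lemma count2 (T : Type) (P : pred T) (s : seq T) x0 i k : i < size s -> k < size s -> i != k ->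
  P (nth x0 s i) -> P (nth x0 s k) -> 1 < count P s.
Proof.
elim: s i k => [//|a s IH] [|i] [|k] //= hi hk hik.
- move=> -> Pk; rewrite add1n ltnS -has_count; apply/(has_nthP x0); by exists k.
- move=> Pi ->; rewrite add1n ltnS -has_count; apply/(has_nthP x0); by exists i.
- move=> Pi Pk; have := IH i k hi hk hik Pi Pk; lia.
Qed.

Lemma count_rcons (T : Type) (P : pred T) s x : count P (rcons s x) = count P s + P x.
Proof. by rewrite -cats1 count_cat /= addn0. Qed.

Lemma wf_edge H k : wf H -> k < size (edges H) ->
  [/\ (edge_at H k).1 < nv H, (edge_at H k).2 < nv H & (edge_at H k).1 != (edge_at H k).2].
Proof.
move=> [_ /(all_nthP (0,0))] h hk; have := h k hk.
by rewrite /edge_at => /and3P [].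
Qed.

Lemma inv_base H lo hi : wf H -> (forall u, lo u <= hi u) ->
  Inv H H lo hi id (fun u => u < nv H) id.
Proof.
move=> hw hlh; split.
- by move=> u hu.
- move=> k hk; have [h1 h2 h3] := wf_edge hw hk; split => //.
  by case: (edge_at H k).
- by [].
- by move=> k hk; have [] := wf_edge hw hk.
- move=> X k1 k k2 [u [hu e1 h1]] [u' [hu' e2 h2]] hk.
  rewrite /= in e1 e2; subst u u'.
  by exists X; split => //; lia.
- move=> u u' _ _ _; exact: MSS_refl.
Qed.

Lemma inv_del_edge H K lo hi phi alive o i : Inv H K lo hi phi alive o ->
  i < size (edges K) ->
  Inv H (del_edge K i) lo hi phi alive (fun k => o (if k < i then k else k.+1)).
Proof.
move=> [ia ie ii il ig il2] hi0.
have sz : size (edges (del_edge K i)) = (size (edges K)).-1 by rewrite /= size_rem_at.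
have ea k : edge_at (del_edge K i) k = edge_at K (if k < i then k else k.+1).
  by rewrite /edge_at /= nth_rem_at.
have kk k : k < size (edges (del_edge K i)) -> (if k < i then k else k.+1) < size (edges K).
  by rewrite sz; case: ifP; lia.
split.
- exact: ia.
- move=> k hk; rewrite ea; exact: ie (kk k hk).
- move=> k k' hk hk' /(ii _ _ (kk k hk) (kk k' hk')); case: ifP; case: ifP; lia.
- move=> k hk; rewrite ea; exact: il (kk k hk).
- exact: ig.
- move=> u u' hu hu' hne.
  apply: (MSS_step (il2 u u' hu hu' hne)).
  have -> : addE (del_edge K i) (phi u, phi u') = del_edge (addE K (phi u, phi u')) i.
    by rewrite /del_edge /addE /= rem_at_rcons.
  by apply: MS_del_edge; rewrite /= size_rcons; lia.
Qed.

Lemma inv_del_vertex H K lo hi phi alive o v : Inv H K lo hi phi alive o ->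
  v < nv K -> 1 < nv K -> isolated K v ->
  Inv H (del_vertex K v) lo hi (fun u => dn v (phi u)) (fun u => alive u && (phi u != v)) o.
Proof.
move=> [ia ie ii il ig il2] hv h1 hiso.
have iso k : k < size (edges K) -> (edge_at K k).1 != v /\ (edge_at K k).2 != v.
  by move=> hk; move: hiso => /(all_nthP (0,0)) /(_ k hk) /andP.
have ea k : k < size (edges K) -> edge_at (del_vertex K v) k = emap (dn v) (edge_at K k).
  by move=> hk; rewrite /edge_at /= (nth_map (0,0)).
have sz : size (edges (del_vertex K v)) = size (edges K) by rewrite /= size_map.
split.
- move=> u /andP [hu hne]; have [h2 h3] := ia u hu; split => //=.
  exact: dn_lt.
- move=> k; rewrite sz => hk; have [h2 h3 h4 h5] := ie k hk.
  have [n1 n2] := iso k hk.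
  split => //.
  + by rewrite h3 /=; move: n1; rewrite -h5.
  + by rewrite h4 /=; move: n2; rewrite -h5.
  + by rewrite ea // -h5.
- by move=> k k'; rewrite sz; exact: ii.
- move=> k; rewrite sz => hk; rewrite ea //=.
  have [n1 n2] := iso k hk; have := il k hk.
  by apply: contra => /eqP /(dn_inj n1 n2) ->.
- move=> X k1 k k2 [u1 [/andP [a1 n1] e1 r1]] [u2 [/andP [a2 n2] e2 r2]] hk.
  have e12 : phi u1 = phi u2 by apply: (dn_inj n1 n2); rewrite e1 e2.
  have [u3 [a3 e3 r3]] : cov lo hi phi alive (phi u1) k.
    apply: (ig _ k1 k k2) => //; [by exists u1 | by exists u2; rewrite e12].
  by exists u3; rewrite a3 e3 n1 -e1; split.
- move=> u u' /andP [a1 n1] /andP [a2 n2] hne.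
  have hne' : phi u != phi u' by apply: contra hne => /eqP ->.
  apply: (MSS_step (il2 u u' a1 a2 hne')).
  have -> : addE (del_vertex K v) (dn v (phi u), dn v (phi u')) =
            del_vertex (addE K (phi u, phi u')) v.
    by rewrite /del_vertex /addE /= map_rcons.
  apply: MS_del_vertex => //.
  by rewrite /isolated /= all_rcons /= n1 n2.
Qed.

Lemma touch (lo hi : nat -> nat) p q : lo p <= hi p -> lo q <= hi q ->
  lo p <= (lo q).+1 -> lo q <= (lo p).+1 -> hi p <= (hi q).+1 -> hi q <= (hi p).+1 ->
  exists r r', [/\ lo p <= r <= hi p, lo q <= r' <= hi q, r <= r'.+1 & r' <= r.+1].
Proof.
move=> *.
case: (ltnP (hi p) (lo q)) => h1.
  by exists (hi p), (lo q); split; lia.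
case: (ltnP (hi q) (lo p)) => h2.
  by exists (lo p), (hi q); split; lia.
by exists (maxn (lo p) (lo q)), (maxn (lo p) (lo q)); split; lia.
Qed.

Lemma contract_eq K i :
  contract K i = Graph (nv K).-1 (map (emap (psi (edge_at K i).1 (edge_at K i).2))
                                     (rem_at i (edges K))).
Proof. by []. Qed.

Lemma inv_contract H K lo hi phi alive o i :
  (forall u, lo u <= hi u) ->
  (forall j p q, j < size (edges H) -> edge_at H j = (p, q) ->
     [/\ lo p <= (lo q).+1, lo q <= (lo p).+1, hi p <= (hi q).+1 & hi q <= (hi p).+1]) ->
  Inv H K lo hi phi alive o ->
  i < size (edges K) -> mult K i = 1 ->
  Inv H (contract K i) lo hi (fun u => psi (edge_at K i).1 (edge_at K i).2 (phi u)) alive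
      (fun k => o (if k < i then k else k.+1)).
Proof.
move=> hlh hlip [ia ie ii il ig il2] hi0 hm.
set a0 := (edge_at K i).1; set b0 := (edge_at K i).2.
have hab : a0 != b0 := il i hi0.
have [oi ha hb eo] := ie i hi0.
have ea0 : phi (edge_at H (o i)).1 = a0 by rewrite /a0 -eo.
have eb0 : phi (edge_at H (o i)).2 = b0 by rewrite /b0 -eo.
have a0n : a0 < nv K by rewrite -ea0; have [] := ia _ ha.
have b0n : b0 < nv K by rewrite -eb0; have [] := ia _ hb.
have sz : size (edges (contract K i)) = (size (edges K)).-1 by rewrite contract_eq /= size_map size_rem_at.
have kk k : k < size (edges (contract K i)) -> (if k < i then k else k.+1) < size (edges K).
  by rewrite sz; case: ifP; lia.
have kne k : (if k < i then k else k.+1) != i by case: ifP => h; apply/eqP; lia.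
have ea k : k < size (edges (contract K i)) ->
    edge_at (contract K i) k = emap (psi a0 b0) (edge_at K (if k < i then k else k.+1)).
  move=> hk; rewrite /edge_at contract_eq /= (nth_map (0,0)) ?nth_rem_at //.
  by move: hk; rewrite sz size_rem_at.
have nopar k : k < size (edges K) -> k != i -> nrm (edge_at K k) != nrm (a0, b0).
  move=> hk hki; apply/negP => /eqP he.
  have := count2 (P := fun e => nrm e == nrm (edge_at K i)) (x0 := (0,0)) hk hi0 hki.
  rewrite /= /edge_at -/(edge_at K k) he /a0 /b0 -surjective_pairing eqxx.
  by move=> /(_ isT isT); rewrite -/(mult K i) hm.
split.
- move=> u hu; have [h1 h2] := ia u hu; split => //.
  by rewrite contract_eq /=; apply: psi_lt.
- move=> k hk; have [h2 h3 h4 h5] := ie _ (kk k hk).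
  split => //; by rewrite ea // -h5.
- move=> k k' hk hk' /(ii _ _ (kk k hk) (kk k' hk')); case: ifP; case: ifP; lia.
- move=> k hk; rewrite ea //=.
  have hk' := kk k hk; have := il _ hk'.
  case E: (edge_at K (if k < i then k else k.+1)) => [p q] /= hpq.
  apply/negP => /eqP /(psi_coll hab hpq) h.
  have := nopar _ hk' (kne k); rewrite E.
  by case: h => [[-> ->]|[-> ->]]; rewrite ?eqxx // nrm_sym eqxx.
- move=> X k1 k k2 [u1 [a1 e1 r1]] [u2 [a2 e2 r2]] hk.
  suff : cov lo hi phi alive (phi u1) k \/ cov lo hi phi alive (phi u2) k.
    by case=> [[u3 [a3 e3 r3]]|[u3 [a3 e3 r3]]]; exists u3; split => //; rewrite e3.
  case: (eqVneq (phi u1) (phi u2)) => hne.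
    left; apply: (ig _ k1 k k2) => //; [by exists u1 | by exists u2; rewrite hne].
  have := psi_coll hab hne; rewrite e1 e2 => /(_ erefl) hc.
  have [h1 h2 h3 h4] := hlip _ _ _ oi (surjective_pairing _).
  have [r [r' [hr hr' t1 t2]]] := touch (hlh _) (hlh _) h1 h2 h3 h4.
  have Sr : cov lo hi phi alive a0 r by exists (edge_at H (o i)).1.
  have Tr : cov lo hi phi alive b0 r' by exists (edge_at H (o i)).2.
  have := gap_union (ig a0) (ig b0) Sr Tr t1 t2.
  case: hc => [[c1 c2]|[c1 c2]] g; rewrite c1 c2.
  + apply: (g k1 k k2) => //; [left; exists u1 | right; exists u2]; by split.
  + have [] := g k1 k k2; [right; exists u1; by split | left; exists u2; by split
      | by [] | by right | by left].
- move=> u u' hu hu' hne.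
  have hne' : phi u != phi u' by apply: contra hne => /eqP ->.
  apply: (MSS_step (il2 u u' hu hu' hne')).
  have ei : edge_at (addE K (phi u, phi u')) i = edge_at K i by rewrite edge_at_addE.
  have -> : addE (contract K i) (psi a0 b0 (phi u), psi a0 b0 (phi u')) =
            contract (addE K (phi u, phi u')) i.
    by rewrite !contract_eq ei /addE /= rem_at_rcons // map_rcons.
  apply: MS_contract; first by rewrite /= size_rcons; lia.
  rewrite /mult ei /= count_rcons -/(mult K i) hm.
  suff -> : (nrm (phi u, phi u') == nrm (edge_at K i)) = false by [].
  apply/negP => /eqP; rewrite [edge_at K i]surjective_pairing -/a0 -/b0 => /nrm_eqP h.
  move/negP: hne; apply; apply/eqP.
  by case: h => [[-> ->]|[-> ->]]; rewrite /psi eqxx (negbTE hab).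
Qed.

Lemma inv_ex H L lo hi : wf H -> (forall u, lo u <= hi u) ->
  (forall j p q, j < size (edges H) -> edge_at H j = (p, q) ->
     [/\ lo p <= (lo q).+1, lo q <= (lo p).+1, hi p <= (hi q).+1 & hi q <= (hi p).+1]) ->
  minor_steps H L -> exists phi alive o, Inv H L lo hi phi alive o.
Proof.
move=> hw hlh hlip; elim => [|K L' _ [phi [alive [o IH]]] st].
  by exists id, (fun u => u < nv H), id; apply: inv_base.
case: st.
- move=> v hv h1 hiso; eexists; eexists; eexists; exact: inv_del_vertex IH hv h1 hiso.
- move=> i hi0; eexists; eexists; eexists; exact: inv_del_edge IH hi0.
- move=> i hi0 hm; eexists; eexists; eexists; exact: inv_contract hlh hlip IH hi0 hm.
Qed.

Lemma usp_attain G : 0 < nv G -> exists x s, is_usp G x s /\ usp G = (size s).+1.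
Proof.
move=> hn.
pose P := fun k : 'I_(nv G).+1 => `[< exists x s, is_usp G x s /\ (size s).+1 = k >].
have h0 : 0 < #|P|.
  rewrite lt0n; apply/existsP; exists (Ordinal (n := (nv G).+1) (m := 1) ltac:(lia)).
  apply/asboolP; exists 0, [::]; split => //; split.
    by rewrite /is_path hn.
  by move=> [|? ?] //.
have [i0 Pi0 e] := eq_bigmax_cond (fun k : 'I_(nv G).+1 => nat_of_ord k) h0.
move: Pi0; rewrite /P unfold_in => /asboolP [x [s [hu hs]]].
by exists x, s; split => //; rewrite hs -e /usp; apply: eq_bigl => k; rewrite /P unfold_in.
Qed.

Lemma usp_ge G x s : is_usp G x s -> (size s).+1 <= nv G -> (size s).+1 <= usp G.
Proof.
move=> hu hs; rewrite /usp.
apply: (bigmax_sup (Ordinal (n := (nv G).+1) (m := (size s).+1) ltac:(lia))) => //=.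
by apply/asboolP; exists x, s.
Qed.

Lemma usp_le G : usp G <= nv G.
Proof. by rewrite /usp; apply/bigmax_leqP => i _; rewrite -ltnS. Qed.

Lemma count2_inv (T : Type) (P : pred T) (s : seq T) x0 : 1 < count P s ->
  exists k1 k2, [/\ k1 < size s, k2 < size s, k1 != k2, P (nth x0 s k1) & P (nth x0 s k2)].
Proof.
elim: s => [//|a s IH] /=.
case Pa: (P a) => /=.
  rewrite add1n ltnS -has_count => /(has_nthP x0) [k hk Pk].
  by exists 0, k.+1; split.
rewrite add0n => /IH [k1 [k2 [h1 h2 h3 h4 h5]]].
by exists k1.+1, k2.+1; split.
Qed.

Lemma final_c (S T : nat -> Prop) p1 q1 p2 q2 c1 c2 : gapfree S -> gapfree T ->
  (forall k, S k -> T k -> False) -> S p1 -> T q1 -> S p2 -> T q2 ->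
  (p1 = c1 /\ q1 = c1.+1 \/ p1 = c1.+1 /\ q1 = c1) ->
  (p2 = c2 /\ q2 = c2.+1 \/ p2 = c2.+1 /\ q2 = c2) -> c1 = c2.
Proof.
move=> gS gT dj Sp1 Tq1 Sp2 Tq2 h1 h2.
case: (ltngtP c1 c2) => // hc; exfalso.
- case: h1 => -[? ?]; case: h2 => -[? ?]; subst.
  + apply: (dj c1.+1); [apply: (gS c1 _ c2) | ] => //; lia.
  + apply: (dj c1.+1); [apply: (gS c1 _ c2.+1) | ] => //; lia.
  + apply: (dj c1.+1); [ | apply: (gT c1 _ c2.+1)] => //; lia.
  + apply: (dj c1.+1); [ | apply: (gT c1 _ c2)] => //; lia.
- case: h1 => -[? ?]; case: h2 => -[? ?]; subst.
  + apply: (dj c2.+1); [apply: (gS c2 _ c1) | ] => //; lia.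
  + apply: (dj c2.+1); [ | apply: (gT c2 _ c1.+1)] => //; lia.
  + apply: (dj c2.+1); [apply: (gS c2 _ c1.+1) | ] => //; lia.
  + apply: (dj c2.+1); [ | apply: (gT c2 _ c1)] => //; lia.
Qed.

Lemma perm_rem_at (T : eqType) (F : nat * nat -> T) (s : seq (nat * nat)) j :
  j < size s -> perm_eq (map F s) (F (nth (0,0) s j) :: map F (rem_at j s)).
Proof.
move=> hj; rewrite map_rem_at -(nth_map (0,0) (F (0,0))) //.
by apply: perm_nth; rewrite size_map.
Qed.

Lemma minor_del G H j : minor G H -> j < size (edges G) -> minor (del_edge G j) H.
Proof.
move=> [K [HK [f [hn finj frng fperm]]]] hj.
set F := fun e => nrm (emap f e).
have : nrm (edge_at G j) \in map F (edges K).
  by rewrite (perm_mem fperm); apply: map_f; apply: mem_nth.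
move=> /mapP [e ein eE].
set jK := index e (edges K).
have hjK : jK < size (edges K) by rewrite index_mem.
exists (del_edge K jK); split; first exact: (MSS_step HK (MS_del_edge hjK)).
exists f; split => //.
have pK := perm_rem_at F hjK.
have pG := perm_rem_at nrm hj.
rewrite nth_index // -eE in pK.
rewrite /= -(perm_cons (nrm (edge_at G j))).
rewrite perm_sym in pK; exact: (perm_trans pK (perm_trans fperm pG)).
Qed.

Lemma wf_del_edge G i : wf G -> wf (del_edge G i).
Proof.
move=> [h0 ha]; split => //=.
apply/allP => e; rewrite mem_cat => /orP [/mem_take | /mem_drop] h;
  by move/allP: ha; apply.
Qed.

Lemma minor_refl G : minor G G.
Proof.
exists G; split; first exact: MSS_refl.
exists id; split => //.
Qed.

Lemma sp_mono H H' : nv H' = nv H -> usp H <= usp H' -> sp H' <= sp H.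
Proof. rewrite /sp => ->; lia. Qed.

Lemma side H p0 s (phi : nat -> nat) (alive : nat -> bool) j X Y : is_usp H p0 s ->
  j < size (edges H) -> alive (edge_at H j).1 -> alive (edge_at H j).2 ->
  (phi (edge_at H j).1 = X /\ phi (edge_at H j).2 = Y \/
   phi (edge_at H j).1 = Y /\ phi (edge_at H j).2 = X) ->
  (forall x y, alive x -> alive y -> phi x = X -> phi y = Y -> ~~ good H p0 s x y) ->
  exists c p q, [/\ j = (nth (0,0) s c).1, cov (lo H p0 s) (hi H p0 s) phi alive X p,
     cov (lo H p0 s) (hi H p0 s) phi alive Y q & (p = c /\ q = c.+1 \/ p = c.+1 /\ q = c)].
Proof.
move=> hP hj.
case E: (edge_at H j) => [h h'] /= ah ah' hor hno.
case: hor => -[e1 e2].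
- have [c [_ hc hpos]] := edge_analysis hP hj E (hno _ _ ah ah' e1 e2).
  case: hpos => [[l1 [r1 [l2 r2]]]|[l1 [r1 [l2 r2]]]].
  + exists c, c, c.+1; split => //; [exists h | exists h' | left]; split => //; lia.
  + exists c, c.+1, c; split => //; [exists h | exists h' | right]; split => //; lia.
- have ng : ~~ good H p0 s h h'.
    by move: (hno _ _ ah' ah e2 e1); rewrite /good andbC.
  have [c [_ hc hpos]] := edge_analysis hP hj E ng.
  case: hpos => [[l1 [r1 [l2 r2]]]|[l1 [r1 [l2 r2]]]].
  + exists c, c.+1, c; split => //; [exists h' | exists h | right]; split => //; lia.
  + exists c, c, c.+1; split => //; [exists h' | exists h | left]; split => //; lia.
Qed.

Lemma mainB G i v w H : wf G -> i < size (edges G) -> nrm (edge_at G i) = nrm (v, w) ->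
  3 <= count (fun e => nrm e == nrm (v, w)) (edges G) ->
  wf H -> minor (del_edge G i) H -> exists H', [/\ wf H', minor G H' & sp H' <= sp H].
Proof.
move=> wG hi0 hE hc wH [K [HK [f [hn finj frng fperm]]]].
have [p0 [s [hP hus]]] := usp_attain (proj1 wH).
pose lo' := lo H p0 s; pose hi' := hi H p0 s.
have hlh : forall u, lo' u <= hi' u by move=> u; exact: lo_le_hi.
have hlip := fun j p q => @lip_all H p0 s j p q.
have [phi [alive [o I]]] := inv_ex wH hlh hlip HK.
have [ia ie ii il ig il2] := I.
have vw : v != w.
  have [_ _ h] := wf_edge wG hi0; move: h; rewrite [edge_at G i]surjective_pairing in hE.
  by case: (nrm_eqP hE) => -[-> ->] //; rewrite eq_sym.
set E := nrm (v, w).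
set F := fun e => nrm (emap f e).
have cK : 1 < count (pred1 E) (map F (edges K)).
  rewrite (permP fperm) /=.
  have h1 := permP (perm_rem_at nrm hi0) (pred1 E).
  have h3 : nrm (nth (0,0) (edges G) i) == E by rewrite -/(edge_at G i) hE.
  rewrite /= h3 /= in h1.
  have h2 : count (pred1 E) (map nrm (edges G)) = count (fun e => nrm e == E) (edges G).
    by rewrite count_map.
  move: h1 h2 hc; rewrite -/E => -> <-; lia.
rewrite count_map in cK.
have [k1 [k2 [hk1 hk2 hk12 P1 P2]]] := count2_inv (0,0) cK.
have endp k : k < size (edges K) ->
    (edge_at K k).1 < nv K /\ (edge_at K k).2 < nv K.
  move=> hk; have [_ a1 a2 e] := ie k hk; rewrite -e /=.
  by split; [have [] := ia _ a1 | have [] := ia _ a2].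
set X := (edge_at K k1).1; set Y := (edge_at K k1).2.
have [Xn Yn] := endp k1 hk1.
have FXY : nrm (f X, f Y) = E by move/eqP: P1; rewrite /F /= /edge_at.
have fXY : f X != f Y.
  apply/eqP => h; move: FXY; rewrite h => /nrm_eqP; move: vw; lia.
have XY : X != Y by apply: contra fXY => /eqP ->.
have or2 : ((edge_at K k2).1 = X /\ (edge_at K k2).2 = Y) \/
           ((edge_at K k2).1 = Y /\ (edge_at K k2).2 = X).
  have [X2n Y2n] := endp k2 hk2.
  have : nrm (f (edge_at K k2).1, f (edge_at K k2).2) = nrm (f X, f Y).
    by move/eqP: P2; rewrite /F /= /edge_at FXY.
  move=> /nrm_eqP [[h1 h2]|[h1 h2]]; [left|right]; split; apply: finj => //;
    by rewrite inE.
have claim : exists x y, [/\ alive x, alive y, phi x = X, phi y = Y & good H p0 s x y].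
  case: (pselect (exists x y, [/\ alive x, alive y, phi x = X, phi y = Y & good H p0 s x y]))
    => // hno; exfalso.
  have hno' : forall x y, alive x -> alive y -> phi x = X -> phi y = Y -> ~~ good H p0 s x y.
    move=> x y ax ay ex ey; apply/negP => g; apply: hno; by exists x, y.
  have dj : forall k, cov lo' hi' phi alive X k -> cov lo' hi' phi alive Y k -> False.
    move=> k [x [ax ex rx]] [y [ay ey ry]]; apply: hno; exists x, y; split => //.
    by rewrite /good; apply/andP; split; rewrite -/lo' -/hi'; lia.
  have [o1 a11 a12 e1] := ie k1 hk1.
  have [o2 a21 a22 e2] := ie k2 hk2.
  have or1 : phi (edge_at H (o k1)).1 = X /\ phi (edge_at H (o k1)).2 = Y \/
              phi (edge_at H (o k1)).1 = Y /\ phi (edge_at H (o k1)).2 = X.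
    by left; rewrite /X /Y -e1.
  have [c1 [p1 [q1 [j1 S1 T1 r1]]]] := side hP o1 a11 a12 or1 hno'.
  have or2' : phi (edge_at H (o k2)).1 = X /\ phi (edge_at H (o k2)).2 = Y \/
              phi (edge_at H (o k2)).1 = Y /\ phi (edge_at H (o k2)).2 = X.
    have ee1 : phi (edge_at H (o k2)).1 = (edge_at K k2).1 by rewrite -e2.
    have ee2 : phi (edge_at H (o k2)).2 = (edge_at K k2).2 by rewrite -e2.
    by rewrite ee1 ee2.
  have [c2 [p2 [q2 [j2 S2 T2 r2]]]] := side hP o2 a21 a22 or2' hno'.
  have c12 := final_c (ig X) (ig Y) dj S1 T1 S2 T2 r1 r2.
  have : o k1 = o k2 by rewrite j1 j2 c12.
  by move/(ii _ _ hk1 hk2)/eqP; rewrite (negbTE hk12).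
have [x [y [ax ay ex ey gxy]]] := claim.
have [xn _] := ia x ax; have [yn _] := ia y ay.
have xy : x != y by apply: contra XY => /eqP e; rewrite -ex -ey e.
exists (addE H (x, y)); split.
- split; first exact: (proj1 wH).
  by rewrite /= all_rcons /= xn yn xy (proj2 wH).
- exists (addE K (X, Y)); split.
    have := il2 x y ax ay; rewrite ex ey => /(_ XY); exact.
  exists f; split => //.
  have pG := perm_rem_at nrm hi0.
  rewrite perm_sym -/(edge_at G i) hE -/E in pG.
  rewrite /= map_rcons perm_rcons.
  apply: (perm_trans _ pG).
  have -> : nrm (emap f (X, Y)) = E by [].
  by rewrite perm_cons.
- apply: sp_mono => //.
  rewrite hus; apply: usp_ge (usp_keep hP gxy) _.
  by rewrite /= -hus; exact: usp_le.
Qed.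

Unset Implicit Arguments.

Theorem lemma6p9 (G : graph) (v w i : nat) :
  wf G ->
  i < size (edges G) ->
  nrm (edge_at G i) = nrm (v, w) ->
  3 <= count (fun e => nrm e == nrm (v, w)) (edges G) ->
  sp_floor (del_edge G i) = sp_floor G.
Proof.
move=> wG hi0 hE hc.
have wGe := wf_del_edge i wG.
apply/eqP; rewrite eqn_leq; apply/andP; split.
- rewrite {2}/sp_floor; case: ex_minnP => m hm _.
  have [H [wH mH <-]] : exists H, [/\ wf H, minor G H & sp H = m].
    move: hm; rewrite /floor_pred => /orP [/asboolP [H [wH [mH e]]] | /eqP ->].
      by exists H.
    by exists G; split => //; exact: minor_refl.
  rewrite /sp_floor; case: ex_minnP => m' _; apply.
  rewrite /floor_pred; apply/orP; left; apply/asboolP; exists H; split => //.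
  by split => //; exact: minor_del mH hi0.
- rewrite {2}/sp_floor; case: ex_minnP => m hm _.
  have [H [wH mH <-]] : exists H, [/\ wf H, minor (del_edge G i) H & sp H = m].
    move: hm; rewrite /floor_pred => /orP [/asboolP [H [wH [mH e]]] | /eqP ->].
      by exists H.
    by exists (del_edge G i); split => //; exact: minor_refl.
  have [H' [wH' mH' le]] := mainB wG hi0 hE hc wH mH.
  rewrite /sp_floor; case: ex_minnP => m' _ /(_ (sp H')) h.
  apply: leq_trans (h _) le.
  by rewrite /floor_pred; apply/orP; left; apply/asboolP; exists H'.
Qed.
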